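(* Let $m\ge5$ be odd, $h=\frac{m-1}{2}$, and $A=\{1,2,\dots,2^{h-1}-1\}$. For any $i,j\in A$ with $j$ odd, $$C_{i+2^h}\cap C_j=\begin{cases}C_j,&\text{if }(i,j)=(2^s i_1,\ i_1+2^{h-s})\text{ for some odd } i_1\in\{1,\dots,2^{h-1-s}-1\}\text{ and } s\in\{2,3,\dots,h-2\},\\ \emptyset,&\text{otherwise.}\end{cases}$$
   Context: Let $v=2^m-1$. For an integer $i$, $C_i=\{i\cdot 2^s \bmod v: s\ge 0\}$ is the $2$-cyclotomic coset of $i$ modulo $v$. *)

(* Defs.v *)
From mathcomp Require Import all_boot.
From mathcomp Require Import classical_sets.
Set Implicit Arguments. Unset Strict Implicit. Unset Printing Implicit Defensive.

Definition cyc_coset (m i : nat) : set nat :=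
  [set x | exists s : nat, x = (i * 2 ^ s) %% (2 ^ m - 1)].

(* Main.v *)
Require Import Defs.
From mathcomp Require Import all_boot.
From mathcomp Require Import classical_sets.
From mathcomp Require Import zify.
Local Open Scope classical_set_scope.

Lemma e2m m : 2^m = (2^m-1).+1.
Proof. by rewrite subn1 prednK // expn_gt0. Qed.
Lemma M1 m b : (b * 2^m) %% (2^m-1) = b %% (2^m-1).
Proof. set v := 2^m-1. have -> : 2^m = v.+1 by exact: e2m. by rewrite mulnS addnC modnMDl. Qed.
Lemma L1 m a k : (a * 2^(m*k)) %% (2^m-1) = a %% (2^m-1).
Proof.
elim: k => [|k IH]; first by rewrite muln0 expn0 muln1.
by rewrite mulnS expnD mulnCA mulnC M1.
Qed.
Lemma L2 m x t : (x * 2^t) %% (2^m-1) = (x * 2^(t %% m)) %% (2^m-1).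
Proof.
have -> : x * 2^t = (x * 2^(t %% m)) * 2^(m * (t %/ m)).
  by rewrite -mulnA -expnD [m * _]mulnC addnC -divn_eq.
by rewrite L1.
Qed.

Lemma L3 m x y u : cyc_coset m x y -> cyc_coset m x ((y * 2^u) %% (2^m-1)).
Proof.
case=> a ->; exists (a+u); by rewrite modnMml expnD mulnA.
Qed.

Lemma L4 m x j : cyc_coset m x j -> cyc_coset m j `<=` cyc_coset m x.
Proof. move=> Hj y [u ->]; exact: L3. Qed.

Lemma L5 m x j z : 0 < m -> j < 2^m-1 -> cyc_coset m x z -> cyc_coset m j z -> cyc_coset m x j.
Proof.
move=> m0 jv Hx [b Eb].
have -> : j = (z * 2^(m*b - b)) %% (2^m-1).
  rewrite Eb modnMml -mulnA -expnD subnKC; last by rewrite leq_pmull.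
  by rewrite L1 modn_small.
exact: L3.
Qed.

Lemma Fw m h s i1 : m = h.*2.+1 -> s <= h -> i1 + 2^(h-s) < 2^m - 1 ->
  cyc_coset m (2^s * i1 + 2^h) (i1 + 2^(h-s)).
Proof.
move=> em sh jv; exists (m - s).
have e1 : 2^h = 2^s * 2^(h-s) by rewrite -expnD subnKC.
have e2 : 2^m = 2^s * 2^(m-s) by rewrite -expnD subnKC //; lia.
have -> : (2 ^ s * i1 + 2 ^ h) * 2 ^ (m - s) = (i1 + 2^(h-s)) * 2^m.
  rewrite e1 e2; set a := 2^s; set b := 2^(h-s); set c := 2^(m-s).
  by rewrite -mulnDr mulnAC mulnC.
by rewrite M1 modn_small.
Qed.

Lemma Bw m h i j t : m = h.*2.+1 -> 2 <= h -> 1 <= i < 2^(h-1) -> j < 2^(h-1) -> odd j ->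
  t < m -> j = ((i + 2^h) * 2^t) %% (2^m-1) ->
  exists s i1 : nat,
        [/\ 2 <= s <= h - 2, odd i1, 1 <= i1 <= 2 ^ (h - 1 - s) - 1,
            i = 2 ^ s * i1 & j = i1 + 2 ^ (h - s)].
Proof.
move=> em h2 /andP[i1 iP] jP oj tm ej.
set P := 2^(h-1) in iP jP.
have eH : 2^h = 2 * P by rewrite /P -expnS; congr (expn 2 _); lia.
have P2 : 2 <= P by rewrite /P -(expn1 2) leq_exp2l //; lia.
have eM : 2^m = 2 * 2^h * 2^h by rewrite em -expnS -expnD; congr (expn 2 _); lia.
rewrite eH in ej.
case: (leqP t h) => th.
  have T1 : 1 <= 2^t by rewrite expn_gt0.
  have TH : 2^t <= 2^h by rewrite leq_exp2l.
  rewrite eH in TH.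
  rewrite modn_small in ej; last by rewrite eM eH; timeout 10 nia.
  timeout 10 nia.
set r := m - t.
have r1 : 1 <= r by rewrite /r; lia.
have rh : r <= h by rewrite /r; lia.
set R := 2^r; set Q := 2^t; set E := 2^(h-r).
have eRQ : R * Q = 2^m by rewrite -expnD /r subnK // ltnW.
have eER : E * R = 2 * P by rewrite -eH -expnD subnK.
have Q2 : 4 * P <= Q.
  have : 2^(h.+1) <= Q by rewrite leq_exp2l.
  rewrite expnS eH; lia.
have R1 : 2 <= R by rewrite /R -(expn1 2) leq_exp2l.
set A := i %/ R; set B := i %% R.
have eI : i = A * R + B by rewrite /A /B -divn_eq.
have BR : B < R by rewrite /B ltn_mod; lia.
have eX : (i + 2 * P) * Q = (A + E) * 2^m + B * Q.
  rewrite -eRQ -eER eI; timeout 10 nia.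
rewrite eX -modnDml M1 modnDml in ej.
have BQ : B * Q <= (R - 1) * Q by rewrite leq_mul2r; apply/orP; right; lia.
have AR : A <= A * R by rewrite leq_pmulr; lia.
have EP : E <= P.
  have : E * 2 <= E * R by rewrite leq_mul2l R1 orbT.
  lia.
have AP : A < P.
  have := leq_pmulr A (ltnW R1). lia.
rewrite mulnBl mul1n in BQ.
have QRQ : Q <= R * Q by rewrite leq_pmull //; lia.
rewrite modn_small in ej; last by rewrite -eRQ; lia.
have B0 : B = 0.
  case: (posnP B) => // Bp. have := leq_pmull Q Bp. lia.
rewrite B0 mul0n addn0 in ej; rewrite B0 addn0 in eI.
have A1 : 1 <= A.
  case: (posnP A) => // A0. rewrite A0 in eI. lia.
have RP : R < P.
  have := leq_pmull R A1. lia.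
have rh1 : r < h - 1 by rewrite -(ltn_exp2l _ _ (leqnn 2)).
have r2 : 2 <= r.
  case: (ltnP 1 r) => // r1'.
  have rr : r = 1 by lia.
  have : E = P by rewrite /E /P rr.
  lia.
have oE : odd E = false.
  by rewrite /E oddX /=; apply/negbTE; lia.
exists r, A; split.
- lia.
- by move: oj; rewrite ej oddD oE addbF.
- apply/andP; split => //.
  have : A * R < 2^(h-1-r) * R by rewrite -expnD subnK ?eI //; lia.
  rewrite ltn_pmul2r; lia.
- by rewrite eI mulnC.
- by rewrite ej.
Qed.

Theorem lemma7 (m : nat) (hm5 : 5 <= m) (hmodd : odd m) :
  let h := (m - 1) %/ 2 in
  forall i j : nat,
    1 <= i <= 2 ^ (h - 1) - 1 ->
    1 <= j <= 2 ^ (h - 1) - 1 ->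
    odd j ->
    let cond := exists s i1 : nat,
        [/\ 2 <= s <= h - 2, odd i1, 1 <= i1 <= 2 ^ (h - 1 - s) - 1,
            i = 2 ^ s * i1 & j = i1 + 2 ^ (h - s)] in
    (cond -> cyc_coset m (i + 2 ^ h) `&` cyc_coset m j = cyc_coset m j) /\
    (~ cond -> cyc_coset m (i + 2 ^ h) `&` cyc_coset m j = set0).
Proof.
move=> h i j /andP[i1 iP] /andP[j1 jP] oj cond.
have em : m = h.*2.+1 by have := modn2 m; rewrite hmodd /h; lia.
have h2 : 2 <= h by rewrite /h; lia.
have P1 : 1 <= 2^(h-1) by rewrite expn_gt0.
have iP' : i < 2^(h-1) by lia.
have jP' : j < 2^(h-1) by lia.
have jv : j < 2^m - 1.
  have : 2^(h-1) < 2^m by rewrite ltn_exp2l //; lia.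
  lia.
split.
- move=> [s [i2 [s2 oi2 ib ei ej]]].
  have Hj : cyc_coset m (i + 2^h) j by rewrite ei ej; apply: Fw => //; [lia | rewrite -ej].
  apply/seteqP; split => y.
    by case.
  move=> Hy; split => //; exact: L4 Hj y Hy.
- move=> ncond; apply/seteqP; split => y //= [Hx Hjy].
  have [t Et] : cyc_coset m (i + 2^h) j by apply: L5 Hx Hjy => //; lia.
  apply: ncond; apply: (@Bw m h i j (t %% m)) => //.
  + by rewrite i1.
  + by rewrite ltn_mod; lia.
  + by rewrite -L2.
Qed.
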